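(* Let $P$ be a disjunctive program and $P_1,P_2,\dots$ a module sequence for $P$. Then $M$ is a stable model of $P$ if and only if there exists a sequence $M_1,M_2,\dots$ such that (1) for each $i\ge1$, $M_i$ is a stable model of $P_i$; (2) for each $i\ge 1$, $M_i=M_{i+1}\cap\mathit{atom}(P_i)$; (3) $M=\bigcup_{i\ge1}M_i$.
   Context: A disjunctive program is a set of rules $r$ of the form $A_1\vee\dots\vee A_m\leftarrow L_1,\dots,L_n$ ($m>0$, $n\ge0$), $A_j$ atoms, $L_i$ atoms or negated atoms $\mathtt{not}\,A$, possibly with function symbols; $head(r)=\{A_1,\dots,A_m\}$, $body^+(r)$ (resp. $body^-(r)$) is the set of atoms $A$ such that $A$ (resp. $\mathtt{not}\,A$) is among the $L_i$. $\mathsf{Ground}(P)$ is the ground instantiation of $P$; for a set $X$ of ground rules, $\mathit{atom}(X)$ is the set of ground atoms occurring in $X$. For a set of ground atoms $M$, the Gelfond–Lifschitz reduct $P^M$ is obtained from $\mathsf{Ground}(P)$ (for a ground program, from the program itself) by deleting every rule $r$ with $body^-(r)\cap M\neq\emptyset$ and deleting all negative literals from the remaining rules. $M$ is a stable model of $P$ iff $M$ is a minimal (w.r.t. set inclusion) Herbrand model of $P^M$. The dependency graph of $P$ has ground atoms as vertices and an edge $A\to B$ whenever for some $r\in\mathsf{Ground}(P)$, $A\in head(r)$ and $B$ occurs in $r$ (body or head); $A$ depends on $B$ if there is a directed path from $A$ to $B$ (every atom depends on itself). $GH$ is the set of ground atoms occurring in heads of rules in $\mathsf{Ground}(P)$;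 for an enumeration $p_1,p_2,\dots$ of $GH$, the induced module sequence is $P_1=\{r\in\mathsf{Ground}(P)\mid p_1\text{ depends on some }A\in head(r)\}$, $P_{i+1}=P_i\cup\{r\in\mathsf{Ground}(P)\mid p_{i+1}\text{ depends on some }A\in head(r)\}$. A module sequence for $P$ is one induced by some enumeration of $GH$. *)

(* Defs.v *)
From Stdlib Require Import List Relations.
Import ListNotations.

(* Terms: variables and function symbols (constants are 0-ary symbols).
   Symbol names are natural numbers. *)
Inductive term : Type :=
| Var (v : nat)
| Fn (f : nat) (args : list term).

Record atom : Type := Atom { pred : nat; targs : list term }.

Inductive literal : Type :=
| Pos (a : atom)
| Neg (a : atom).

(* A_1 v ... v A_m <- L_1, ..., L_n *)
Record rule : Type := Rule { head : list atom; body : list literal }.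

Definition program := rule -> Prop.
Definition atoms := atom -> Prop.

Definition is_disj_program (P : program) : Prop :=
  forall r, P r -> head r <> [].

Definition body_pos (r : rule) : atoms := fun a => In (Pos a) (body r).
Definition body_neg (r : rule) : atoms := fun a => In (Neg a) (body r).

Fixpoint pos_atoms (l : list literal) : list atom :=
  match l with
  | [] => []
  | Pos a :: l' => a :: pos_atoms l'
  | Neg _ :: l' => pos_atoms l'
  end.

Fixpoint tsubst (s : nat -> term) (t : term) : term :=
  match t with
  | Var v => s v
  | Fn f l => Fn f (map (tsubst s) l)
  end.

Definition asubst (s : nat -> term) (a : atom) : atom :=
  Atom (pred a) (map (tsubst s) (targs a)).

Definition lsubst (s : nat -> term) (l : literal) : literal :=
  match l with Pos a => Pos (asubst s a) | Neg a => Neg (asubst s a) end.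

Definition rsubst (s : nat -> term) (r : rule) : rule :=
  Rule (map (asubst s) (head r)) (map (lsubst s) (body r)).

Fixpoint sym_in_term (f n : nat) (t : term) : Prop :=
  match t with
  | Var _ => False
  | Fn g l => (g = f /\ length l = n) \/
      (fix any (l : list term) : Prop :=
         match l with [] => False | t :: l' => sym_in_term f n t \/ any l' end) l
  end.

Definition sym_in_atom (f n : nat) (a : atom) : Prop :=
  exists t, In t (targs a) /\ sym_in_term f n t.

Definition atom_in_rule (a : atom) (r : rule) : Prop :=
  In a (head r) \/ In (Pos a) (body r) \/ In (Neg a) (body r).

Definition sym_in_prog (P : program) (f n : nat) : Prop :=
  exists r a, P r /\ atom_in_rule a r /\ sym_in_atom f n a.

(* Function symbols of the Herbrand universe of P: those occurring in P,
   plus one arbitrary constant (the symbol 0 of arity 0) if P contains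
   no constant. *)
Definition herbrand_sym (P : program) (f n : nat) : Prop :=
  sym_in_prog P f n \/
  (f = 0 /\ n = 0 /\ ~ (exists c, sym_in_prog P c 0)).

Fixpoint ground_over (Q : nat -> nat -> Prop) (t : term) : Prop :=
  match t with
  | Var _ => False
  | Fn f l => Q f (length l) /\
      (fix all (l : list term) : Prop :=
         match l with [] => True | t :: l' => ground_over Q t /\ all l' end) l
  end.

Definition herbrand_universe (P : program) : term -> Prop :=
  ground_over (herbrand_sym P).

Definition Ground (P : program) : program :=
  fun r' => exists r s, P r /\ (forall v, herbrand_universe P (s v)) /\
                        r' = rsubst s r.

Definition atom_of (X : program) : atoms :=
  fun a => exists r, X r /\ atom_in_rule a r.

Definition reduct (X : program) (M : atoms) : program :=
  fun r' => exists r, X r /\ (forall a, body_neg r a -> ~ M a) /\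
                      r' = Rule (head r) (map Pos (pos_atoms (body r))).

Definition is_model (M : atoms) (X : program) : Prop :=
  forall r, X r ->
    (forall a, body_pos r a -> M a) ->
    (forall a, body_neg r a -> ~ M a) ->
    exists a, In a (head r) /\ M a.

Definition subset (N M : atoms) : Prop := forall a, N a -> M a.

Definition is_minimal_model (M : atoms) (X : program) : Prop :=
  is_model M X /\ forall N, subset N M -> is_model N X -> subset M N.

Definition stable_model_ground (X : program) (M : atoms) : Prop :=
  is_minimal_model M (reduct X M).

Definition stable_model (P : program) (M : atoms) : Prop :=
  stable_model_ground (Ground P) M.

Definition dep_edge (P : program) (A B : atom) : Prop :=
  exists r, Ground P r /\ In A (head r) /\ atom_in_rule B r.

Definition depends (P : program) : atom -> atom -> Prop :=
  clos_refl_trans atom (dep_edge P).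

Definition GH (P : program) : atoms :=
  fun A => exists r, Ground P r /\ In A (head r).

(* An enumeration p_1, p_2, ... of GH, indexed from 0 in Rocq
   (p 0 = p_1).  Every element listed is in GH and every element of GH is
   listed. *)
Definition is_enumeration (P : program) (p : nat -> atom) : Prop :=
  (forall n, GH P (p n)) /\ (forall A, GH P A -> exists n, p n = A).

(* the module sequence induced by p: induced_module P p i = P_{i+1} *)
Definition induced_module (P : program) (p : nat -> atom) (i : nat) : program :=
  fun r => Ground P r /\
           exists j A, j <= i /\ In A (head r) /\ depends P (p j) A.

Definition is_module_sequence (P : program) (Ps : nat -> program) : Prop :=
  exists p, is_enumeration P p /\
    forall i r, Ps i r <-> induced_module P p i r.

(* Main.v *)
Require Import Defs.
From Stdlib Require Import List Relations Classical Arith Lia.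
Import ListNotations.
Notation head := Defs.head.

Definition sat (N M : atoms) (X : program) : Prop :=
  forall r, X r -> (forall a, body_neg r a -> ~ M a) ->
    (forall a, body_pos r a -> N a) -> exists a, In a (Defs.head r) /\ N a.

Lemma pos_atoms_in l a : In a (pos_atoms l) <-> In (Pos a) l.
Proof.
  induction l as [|[b|b] l IH]; simpl; [tauto| |].
  - split; intros [H|H]; [left; congruence | right; apply IH; auto
                         | left; congruence | right; apply IH; auto].
  - rewrite IH; split; [auto| intros [H|H]; [discriminate|auto]].
Qed.

Lemma in_map_Pos xs a : In (Pos a) (map Pos xs) <-> In a xs.
Proof.
  induction xs; simpl; [tauto|]. rewrite IHxs.
  split; intros [H|H]; auto; left; congruence.
Qed.

Lemma in_map_Pos_neg xs a : ~ In (Neg a) (map Pos xs).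
Proof. induction xs; simpl; [tauto|]. intros [H|H]; [discriminate|auto]. Qed.

Lemma model_reduct N M X : is_model N (reduct X M) <-> sat N M X.
Proof.
  unfold is_model, sat, reduct. split.
  - intros H r Xr Hneg Hpos.
    destruct (H (Rule (Defs.head r) (map Pos (pos_atoms (body r))))) as [a [Ha1 Ha2]].
    + exists r; auto.
    + intros a Ha. unfold body_pos in Ha; simpl in Ha. apply Hpos. unfold body_pos.
      apply in_map_Pos, pos_atoms_in in Ha. exact Ha.
    + intros a Ha. unfold body_neg in Ha; simpl in Ha. exfalso; eapply in_map_Pos_neg; eauto.
    + exists a; simpl in Ha1; auto.
  - intros H r' [r [Xr [Hneg ->]]] Hpos _. simpl. apply H; auto.
    intros a Ha. apply Hpos. unfold body_pos; simpl. apply in_map_Pos, pos_atoms_in. exact Ha.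
Qed.

Lemma stable_iff X M : stable_model_ground X M <->
  (sat M M X /\ forall N, subset N M -> sat N M X -> subset M N).
Proof.
  unfold stable_model_ground, is_minimal_model.
  split; intros [H1 H2]; split.
  - apply model_reduct; auto.
  - intros N HN HS. apply H2; auto. apply model_reduct; auto.
  - apply model_reduct; auto.
  - intros N HN HS. apply H2; auto. apply model_reduct; auto.
Qed.

Lemma stable_sub X M : sat M M X -> (forall N, subset N M -> sat N M X -> subset M N) ->
  subset M (atom_of X).
Proof.
  intros H1 H2.
  assert (Hs := H2 (fun a => M a /\ atom_of X a)).
  intros a Ma. apply Hs; auto.
  - intros b Hb; apply Hb.
  - intros r Xr Hneg Hpos.
    destruct (H1 r Xr Hneg (fun a h => proj1 (Hpos a h))) as [b [Hb Mb]].
    exists b; split; auto; split; auto; exists r; split; auto; left; auto.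
Qed.

(* Index i in Rocq corresponds to index i+1 in the paper. *)
Theorem theorem3p6 (P : program) (Ps : nat -> program) :
  is_disj_program P ->
  is_module_sequence P Ps ->
  forall M : atoms,
    stable_model P M <->
    exists Ms : nat -> atoms,
      (forall i, stable_model_ground (Ps i) (Ms i)) /\
      (forall i a, Ms i a <-> (Ms (S i) a /\ atom_of (Ps i) a)) /\
      (forall a, M a <-> exists i, Ms i a).
Proof.
  intros HD [p [[Henum1 Henum2] HPs]] M.
  assert (F1 : forall i r, Ps i r -> Ground P r).
  { intros i r H; apply HPs in H; destruct H; auto. }
  assert (F2 : forall i r, Ps i r -> Ps (S i) r).
  { intros i r H; apply HPs; apply HPs in H.
    destruct H as [Hg [j [A [Hj [HA Hd]]]]]; split; auto; exists j, A; repeat split; auto. }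
  assert (Fmono : forall i j r, i <= j -> Ps i r -> Ps j r).
  { intros i j r Hle; induction Hle; auto. }
  assert (Umono : forall i j a, i <= j -> atom_of (Ps i) a -> atom_of (Ps j) a).
  { intros i j a Hle [r [Hr Ha]]. exists r; split; auto. apply (Fmono i j r Hle Hr). }
  assert (F3 : forall i r a, Ground P r -> In a (Defs.head r) -> atom_of (Ps i) a -> Ps i r).
  { intros i r a Hg Ha [r' [Hr' Hin]]. pose proof Hr' as Hr2. apply HPs in Hr2.
    destruct Hr2 as [Hg' [j [A [Hj [HA Hd]]]]]. apply HPs. split; auto.
    exists j, a. repeat split; auto. unfold depends in *.
    eapply rt_trans; [exact Hd|]. apply rt_step. exists r'; auto. }
  assert (F4 : forall i r a, Ps i r -> atom_in_rule a r -> atom_of (Ps i) a).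
  { intros i r a Hr Ha; exists r; auto. }
  assert (F5 : forall r, Ground P r -> exists i, Ps i r).
  { intros r Hg. pose proof Hg as [r0 [s [Hr0 [_ Heq]]]].
    destruct (Defs.head r) as [|a hs] eqn:Eh.
    - exfalso. subst r. simpl in Eh. apply map_eq_nil in Eh. apply (HD r0 Hr0 Eh).
    - destruct (Henum2 a) as [n Hn].
      + exists r; split; auto; rewrite Eh; left; auto.
      + exists n. apply HPs. split; auto. exists n, a. repeat split; auto.
        * rewrite Eh; left; auto.
        * rewrite Hn; apply rt_refl. }
  split.
  - intros HM. unfold stable_model in HM. apply stable_iff in HM. destruct HM as [HM1 HM2].
    exists (fun i a => M a /\ atom_of (Ps i) a). split; [|split].
    + intros i. apply stable_iff. split.
      * intros r Hr Hneg Hpos. destruct (HM1 r (F1 _ _ Hr)) as [a [Ha Ma]].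
        -- intros a Ha Ma. apply (Hneg a Ha). split; auto. apply (F4 i r a Hr). right; right; exact Ha.
        -- intros a Ha; apply (Hpos a Ha).
        -- exists a; repeat split; auto. apply (F4 i r a Hr); left; auto.
      * intros N HN HS. set (N' := fun a => N a \/ (M a /\ ~ atom_of (Ps i) a)).
        assert (HS' : sat N' M (Ground P)).
        { intros r Hg Hneg Hpos.
          destruct (classic (exists a, In a (Defs.head r) /\ atom_of (Ps i) a)) as [[a [Ha Ua]]|Hno].
          - assert (Hr : Ps i r) by (eapply F3; eauto).
            destruct (HS r Hr) as [b [Hb Nb]].
            + intros b Hb [Mb _]. apply (Hneg b Hb Mb).
            + intros b Hb. destruct (Hpos b Hb) as [Nb|[_ nU]]; auto. exfalso; apply nU.
              apply (F4 i r b Hr). right; left; auto.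
            + exists b; split; auto; left; auto.
          - destruct (HM1 r Hg Hneg) as [b [Hb Mb]].
            + intros b Hb. destruct (Hpos b Hb) as [Nb|[Mb _]]; auto. apply (HN b Nb).
            + exists b; split; auto. right; split; auto. intros Ub; apply Hno; exists b; auto. }
        assert (Hsub : subset N' M). { intros a [Na|[Ma _]]; auto. apply (HN a Na). }
        pose proof (HM2 N' Hsub HS') as HMN.
        intros a [Ma Ua]. destruct (HMN a Ma) as [Na|[_ nU]]; auto; contradiction.
    + intros i a. split.
      * intros [Ma Ua]. repeat split; auto. apply (Umono i (S i)); auto.
      * intros [[Ma _] Ua]; split; auto.
    + intros a. split.
      * intros Ma. destruct (stable_sub _ _ HM1 HM2 a Ma) as [r [Hg Hin]].
        destruct (F5 r Hg) as [i Hi]. exists i; split; auto. exists r; auto.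
      * intros [i [Ma _]]; auto.
  - intros [Ms [H1 [H2 H3]]].
    assert (Hsub : forall i a, Ms i a -> atom_of (Ps i) a).
    { intros i. destruct (proj1 (stable_iff _ _) (H1 i)) as [A B]. apply (stable_sub _ _ A B). }
    assert (Hup : forall i j a, i <= j -> Ms j a -> atom_of (Ps i) a -> Ms i a).
    { intros i j a Hle; induction Hle; intros Hj Ui; auto.
      apply IHHle; auto. apply H2; split; auto. apply (Umono i m); auto. }
    assert (Hdown : forall i j a, i <= j -> Ms i a -> Ms j a).
    { intros i j a Hle; induction Hle; intros Hi; auto.
      apply (proj1 (proj1 (H2 m a) (IHHle Hi))). }
    assert (HMi : forall i a, (M a /\ atom_of (Ps i) a) <-> Ms i a).
    { intros i a. split.
      - intros [Ma Ua]. apply H3 in Ma. destruct Ma as [j Hj].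
        destruct (le_lt_dec j i).
        + apply (Hdown j i a); auto.
        + apply (Hup i j a); auto; lia.
      - intros Hi. split; [apply H3; exists i; auto | apply Hsub; auto]. }
    unfold stable_model; apply stable_iff. split.
    + intros r Hg Hneg Hpos. destruct (F5 r Hg) as [i Hi].
      destruct (proj1 (stable_iff _ _) (H1 i)) as [A _].
      destruct (A r Hi) as [a [Ha Ma]].
      * intros a Ha Ma. apply (Hneg a Ha). apply H3; exists i; auto.
      * intros a Ha. apply HMi. split; auto. apply (F4 i r a Hi); right; left; auto.
      * exists a; split; auto; apply H3; exists i; auto.
    + intros N HN HS a Ma. apply H3 in Ma. destruct Ma as [i Hi].
      destruct (proj1 (stable_iff _ _) (H1 i)) as [_ B].
      assert (HSi : sat (fun b => N b /\ atom_of (Ps i) b) (Ms i) (Ps i)).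
      { intros r Hr Hneg Hpos. destruct (HS r (F1 _ _ Hr)) as [b [Hb Nb]].
        - intros b Hb Mb. apply (Hneg b Hb). apply HMi. split; auto.
          apply (F4 i r b Hr); right; right; auto.
        - intros b Hb. apply (Hpos b Hb).
        - exists b; repeat split; auto. apply (F4 i r b Hr); left; auto. }
      assert (Hs : subset (fun b => N b /\ atom_of (Ps i) b) (Ms i)).
      { intros b [Nb Ub]. apply HMi. split; auto. }
      apply (B _ Hs HSi a Hi).
Qed.
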